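(* For any $p\in(0,1/2]$ there is $\gamma>0$ depending only on $p$ such that for every $\varepsilon\in(0,1]$, every $n\geq 2$, every $s\in\mathbb{R}$ and every $x\in S^{n-1}$, $$\mathbb{P}\big\{\|(B_n^1(p)+s\,1_{n-1}1_n^\top)x\|_2\leq \gamma\sqrt{\varepsilon n}\big\}\leq \Big(\frac{e}{\varepsilon}\Big)^{\varepsilon(n-1)}(1-p)^{(n-1)(1-\varepsilon)}.$$
   Context: $B_n(p)$ is the $n\times n$ random matrix with i.i.d. entries taking value $1$ with probability $p$ and $0$ with probability $1-p$; $B_n^1(p)$ is the $(n-1)\times n$ matrix obtained from $B_n(p)$ by removing the last row. $1_m$ is the $m$-dimensional vector of all ones; $S^{n-1}$ is the unit Euclidean sphere in $\mathbb{R}^n$. *)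

(* Defs.v *)
From HB Require Import structures.
From mathcomp Require Import all_boot all_order all_algebra.
From mathcomp Require Import all_classical all_reals all_analysis.
Set Implicit Arguments. Unset Strict Implicit. Unset Printing Implicit Defensive.
Import Order.TTheory GRing.Theory Num.Theory.
Local Open Scope ring_scope.

(* Law of a random m x n matrix with i.i.d. Bernoulli(p) entries (true = 1):
   the probability of a 0/1 matrix M is p^{#ones} (1-p)^{#zeros}. *)
Definition bern_weight (R : realType) (p : R) (m n : nat) (M : 'M[bool]_(m, n)) : R :=
  \prod_(i < m) \prod_(j < n) (if M i j then p else 1 - p).

Definition bern_prob (R : realType) (p : R) (m n : nat) (E : pred 'M[bool]_(m, n)) : R :=
  \sum_(M : 'M[bool]_(m, n) | E M) bern_weight p M.

Definition mx01 (R : realType) (m n : nat) (M : 'M[bool]_(m, n)) : 'M[R]_(m, n) :=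
  \matrix_(i, j) (M i j)%:R.

Definition norm2 (R : realType) (m : nat) (v : 'cV[R]_m) : R :=
  Num.sqrt (\sum_(i < m) v i 0 ^+ 2).

Definition ones_mx (R : realType) (m n : nat) : 'M[R]_(m, n) := const_mx 1.

(* Main.v *)
Require Import Defs.
From HB Require Import structures.
From mathcomp Require Import all_boot all_order all_algebra.
From mathcomp Require Import all_classical all_reals all_analysis.
From mathcomp Require Import ring lra zify.
Import Order.TTheory GRing.Theory Num.Theory.
Import numFieldNormedType.Exports.
Local Open Scope classical_set_scope.
Local Open Scope ring_scope.

Section Trig.
Context {R : realType}.

Lemma mono0 (f df : R -> R) : (forall x : R, is_derive x (1:R) f (df x)) ->
  (forall x : R, 0 <= x -> 0 <= df x) -> forall y : R, 0 <= y -> f 0 <= f y.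
Proof.
move=> hd hpos y y0.
have cont : continuous f.
  by move=> x; apply/differentiable_continuous/derivable1_diffP; apply: ex_derive.
have cf : {within `[0, y], continuous f} by apply: continuous_subspaceT.
have [c cin E] := MVT_segment y0 (fun x _ => hd x) cf.
rewrite -subr_ge0 E; apply: mulr_ge0; last by rewrite subr0.
by apply: hpos; move: cin; rewrite in_itv /= => /andP[].
Qed.

Arguments mono0 {f df}.

Ltac dsimp := apply: is_derive_eq; rewrite ?scaler0 /GRing.scale /= ?mulr1 ?subr0 ?addr0 ?add0r ?sub0r;
  field; rewrite ?pnatr_eq0 //.

Lemma sin_le_x (y : R) : 0 <= y -> sin y <= y.
Proof.
move=> y0.
have d : forall x : R, is_derive x (1:R) (fun y : R => y - sin y) (1 - cos x).
  by move=> x; dsimp.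
have := mono0 d _ _ y0; rewrite sin0 subr0 subr_ge0; apply.
by move=> x _; rewrite subr_ge0 cos_le1.
Qed.

Lemma cos_lb0 (y : R) : 0 <= y -> 1 - y ^+ 2 / 2 <= cos y.
Proof.
move=> y0.
have d : forall x : R, is_derive x (1:R) (fun y : R => cos y - 1 + y ^+ 2 / 2) (- sin x + x).
  by move=> x; dsimp.
have := mono0 d _ _ y0; rewrite cos0 subrr expr0n /= mul0r addr0.
have H : forall x : R, 0 <= x -> 0 <= - sin x + x by move=> x x0; rewrite addrC subr_ge0 sin_le_x.
move=> /(_ H); lra.
Qed.

Lemma cos_lb (y : R) : 1 - y ^+ 2 / 2 <= cos y.
Proof. by rewrite -cos_norm -real_normK ?num_real // cos_lb0. Qed.

Lemma sin_lb0 (y : R) : 0 <= y -> y - y ^+ 3 / 6 <= sin y.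
Proof.
move=> y0.
have d : forall x : R, is_derive x (1:R) (fun y : R => sin y - y + y ^+ 3 / 6) (cos x - 1 + x ^+ 2 / 2).
  by move=> x; dsimp.
have := mono0 d _ _ y0; rewrite sin0 subrr expr0n /= mul0r addr0.
have H : forall x : R, 0 <= x -> 0 <= cos x - 1 + x ^+ 2 / 2 by move=> x x0; have := cos_lb x; lra.
move=> /(_ H); lra.
Qed.

Lemma cos_ub0 (y : R) : 0 <= y -> cos y <= 1 - y ^+ 2 / 2 + y ^+ 4 / 24.
Proof.
move=> y0.
have d : forall x : R, is_derive x (1:R) (fun y : R => 1 - y ^+ 2 / 2 + y ^+ 4 / 24 - cos y) (- x + x ^+ 3 / 6 + sin x).
  by move=> x; dsimp.
have := mono0 d _ _ y0; rewrite cos0 expr0n /= mul0r expr0n /= mul0r subr0 addr0 subrr.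
have H : forall x : R, 0 <= x -> 0 <= - x + x ^+ 3 / 6 + sin x by move=> x x0; have := @sin_lb0 x x0; lra.
move=> /(_ H); lra.
Qed.

Lemma cos_ub (y : R) : cos y <= 1 - y ^+ 2 / 2 + y ^+ 4 / 24.
Proof.
have -> : y ^+ 4 = (y ^+ 2) ^+ 2 by rewrite -exprM.
by rewrite -cos_norm -real_normK ?num_real // -exprM cos_ub0.
Qed.
End Trig.

Section Ef.
Context {R : realType} (p : R).

Fixpoint Ef (xs : seq R) (g : R -> R) : R :=
  match xs with
  | [::] => g 0
  | x :: xs' => (1 - p) * Ef xs' g + p * Ef xs' (fun t => g (x + t))
  end.

Lemma Ef_ext xs g h : (forall t, g t = h t) -> Ef xs g = Ef xs h.
Proof.
elim: xs g h => [|x xs IH] g h e /=; first exact: e.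
by rewrite (IH g h e) (IH (fun t => g (x + t)) (fun t => h (x + t))).
Qed.

Lemma Ef_const xs c : Ef xs (fun _ => c) = c.
Proof. by elim: xs => [|x xs IH] //=; rewrite !IH; ring. Qed.

Lemma Ef_add xs g h : Ef xs (fun t => g t + h t) = Ef xs g + Ef xs h.
Proof.
elim: xs g h => [|x xs IH] g h //=.
rewrite (IH g h) (IH (fun t => g (x + t)) (fun t => h (x + t))); ring.
Qed.

Lemma Ef_scale xs c g : Ef xs (fun t => c * g t) = c * Ef xs g.
Proof.
elim: xs g => [|x xs IH] g //=.
rewrite (IH g) (IH (fun t => g (x + t))); ring.
Qed.

Lemma Ef_sum xs (I : Type) (r : seq I) (F : I -> R -> R) :
  Ef xs (fun t => \sum_(i <- r) F i t) = \sum_(i <- r) Ef xs (F i).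
Proof.
elim: r => [|i r IH].
  by rewrite big_nil (@Ef_ext xs _ (fun _ => 0)) ?Ef_const // => t; rewrite big_nil.
rewrite big_cons -IH -Ef_add; apply: Ef_ext => t; by rewrite big_cons.
Qed.

Hypothesis p0 : 0 <= p.
Hypothesis p1 : p <= 1.

Lemma Ef_le xs g h : (forall t, g t <= h t) -> Ef xs g <= Ef xs h.
Proof.
elim: xs g h => [|x xs IH] g h e /=; first exact: e.
apply: lerD; apply: ler_wpM2l; rewrite ?subr_ge0 //; apply: IH => t; exact: e.
Qed.

Hypothesis phalf : p <= 1 - p.

Lemma pair_aux (a b : R) : 0 <= a -> 0 <= b -> a + b <= 1 -> (1 - p) * a + p * b <= 1 - p.
Proof.
move=> a0 b0 ab.
have := phalf; have := p0 => P0 PH.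
have h1 : 0 <= (1 - p - p) * b by apply: mulr_ge0 => //; lra.
have h2 : 0 <= (1 - p) * (1 - a - b) by apply: mulr_ge0; lra.
lra.
Qed.

Lemma Ef_pair xs g : (forall t, 0 <= g t <= 1) ->
  (exists2 x, x \in xs & forall t, g t + g (x + t) <= 1) -> Ef xs g <= 1 - p.
Proof.
elim: xs g => [|y xs IH] g g01 [x]; first by rewrite in_nil.
rewrite in_cons => /orP[/eqP -> {x}|xin] hx /=.
  have -> : (1 - p) * Ef xs g + p * Ef xs (fun t => g (y + t)) =
     Ef xs (fun t => (1 - p) * g t + p * g (y + t)) by rewrite Ef_add !Ef_scale.
  apply: le_trans (_ : _ <= Ef xs (fun _ => 1 - p)) _; last by rewrite Ef_const.
  apply: Ef_le => t; apply: pair_aux; [by case/andP: (g01 t)|by case/andP: (g01 (y + t))|exact: hx].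
apply: le_trans (_ : _ <= (1 - p) * (1 - p) + p * (1 - p)) _.
  2: by rewrite le_eqVlt; apply/orP; left; apply/eqP; ring.
apply: lerD; apply: ler_wpM2l; rewrite ?subr_ge0 //; apply: IH;
  try (by exists x); try (by move=> t; apply: g01).
by exists x => // t; rewrite addrA (addrC y) -addrA; apply: hx.
Qed.
End Ef.

Section Char.
Context {R : realType} (p : R).

Lemma Ef_char xs (th : R) : exists A B : R,
  [/\ (forall phi, Ef p xs (fun t => cos (th * t + phi)) = A * cos phi - B * sin phi),
      (forall phi, Ef p xs (fun t => sin (th * t + phi)) = B * cos phi + A * sin phi) &
      A ^+ 2 + B ^+ 2 = \prod_(x <- xs) (1 - 2 * p * (1 - p) * (1 - cos (th * x)))].
Proof.
elim: xs => [|x xs [A [B [hc hs hn]]]].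
  by exists 1, 0; split => [phi|phi|] /=; rewrite ?big_nil ?mulr0 ?add0r; ring.
set c := cos (th * x); set s := sin (th * x).
exists ((1 - p) * A + p * (A * c - B * s)), ((1 - p) * B + p * (B * c + A * s)).
split => [phi|phi|] /=.
- rewrite hc (@Ef_ext _ p xs _ (fun t => cos (th * t + (th * x + phi)))); last first.
    by move=> t; congr cos; ring.
  rewrite hc cosD sinD -/c -/s; ring.
- rewrite hs (@Ef_ext _ p xs _ (fun t => sin (th * t + (th * x + phi)))); last first.
    by move=> t; congr sin; ring.
  rewrite hs cosD sinD -/c -/s; ring.
rewrite big_cons -hn.
have cs : c ^+ 2 + s ^+ 2 = 1 by rewrite cos2Dsin2.
have -> : ((1 - p) * A + p * (A * c - B * s)) ^+ 2 + ((1 - p) * B + p * (B * c + A * s)) ^+ 2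
   = (A ^+ 2 + B ^+ 2) * ((1 - p) ^+ 2 + 2 * p * (1 - p) * c + p ^+ 2 * (c ^+ 2 + s ^+ 2)) by ring.
rewrite cs -/c; ring.
Qed.


Lemma prod_bound (xs : seq R) (f : R -> R) : (forall x, 0 <= f x <= 1) ->
  (\prod_(x <- xs) (1 - f x)) * (1 + \sum_(x <- xs) f x) <= 1 /\
  0 <= \prod_(x <- xs) (1 - f x) /\ 0 <= \sum_(x <- xs) f x.
Proof.
move=> f01; elim: xs => [|x xs [IH1 [IH2 IH3]]]; first by rewrite !big_nil; lra.
rewrite !big_cons; have /andP[a b] := f01 x.
set P := \prod_(_ <- _) _ in IH1 IH2 *; set S := \sum_(_ <- _) _ in IH1 IH3 *.
have h1 : 0 <= P * (f x * f x + f x * S) by apply: mulr_ge0 => //; nra.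
split; last split; [nra| |lra].
by apply: mulr_ge0 => //; lra.
Qed.

Lemma one_m_cos (a : R) : `|a| <= 2 -> a ^+ 2 / 3 <= 1 - cos a.
Proof.
move=> ha; have := cos_ub a.
have h2 : a ^+ 2 <= 4.
  rewrite -real_normK ?num_real //; have := normr_ge0 a => h0.
  rewrite expr2; nra.
have h4 : a ^+ 4 = a ^+ 2 * a ^+ 2 by rewrite -exprD.
have h0 : 0 <= a ^+ 2 by apply: sqr_ge0.
rewrite h4; nra.
Qed.

Lemma Ef_cos_le xs (th phi eta : R) : 0 <= eta ->
  \prod_(x <- xs) (1 - 2 * p * (1 - p) * (1 - cos (th * x))) <= eta ^+ 2 ->
  Ef p xs (fun t => cos (th * t + phi)) <= eta.
Proof.
move=> e0; have [A [B [hc _ hn]]] := Ef_char xs th; rewrite -hn hc => hAB.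
set v := A * cos phi - B * sin phi.
have cs := cos2Dsin2 phi.
have : v ^+ 2 <= A ^+ 2 + B ^+ 2.
  have -> : A ^+ 2 + B ^+ 2 = v ^+ 2 + (A * sin phi + B * cos phi) ^+ 2.
    rewrite /v -[LHS]mulr1 -cs; ring.
  by rewrite lerDl sqr_ge0.
move=> hv; have hv2 := le_trans hv hAB.
rewrite !expr2 in hv2; nra.
Qed.

End Char.

Section Fourier.
Context {R : realType} (p : R).

Definition rr := p / 512.
Definition ind (a t : R) : R := if `|t - a| <= rr then 1 else 0.

Lemma sum_const16 (c : R) : \sum_(k < 16) c = 16 * c.
Proof. by rewrite sumr_const card_ord mulr_natl. Qed.

Lemma K_expand (D u : R) :
  (\sum_(k < 16) cos (k%:R * D * u)) ^+ 2 + (\sum_(k < 16) sin (k%:R * D * u)) ^+ 2 =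
  \sum_(k < 16) \sum_(l < 16) cos ((k%:R - l%:R) * D * u).
Proof.
rewrite !expr2 !mulr_suml -big_split /=; apply: eq_bigr => k _.
rewrite !mulr_sumr -big_split /=; apply: eq_bigr => l _.
rewrite -cosB; congr cos; ring.
Qed.

Lemma diff_bounds (k l : 'I_16) :
  `|(k%:R - l%:R : R)| <= 15 /\ (k != l -> 1 <= (k%:R - l%:R : R) ^+ 2).
Proof.
have hk : (k%:R : R) <= 15 by rewrite ler_nat -ltnS ltn_ord.
have hl : (l%:R : R) <= 15 by rewrite ler_nat -ltnS ltn_ord.
have hk0 : (0 : R) <= k%:R by [].
have hl0 : (0 : R) <= l%:R by [].
split; first by rewrite ler_norml; apply/andP; split; lra.
move=> kl; have [kl'|kl'] := ltnP k l.
  have : (k.+1%:R : R) <= l%:R by rewrite ler_nat.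
  rewrite -natr1 => h; nra.
have : (l.+1%:R : R) <= k%:R.
  by rewrite ler_nat ltn_neqAle kl' andbT eq_sym.
rewrite -natr1 => h; nra.
Qed.


Lemma term_bound xs (k l : 'I_16) (D phi : R) : 0 < p -> p <= 2^-1 ->
  \sum_(x <- xs) x ^+ 2 = 1 -> (forall x, x \in xs -> `|x| <= 2 * rr) -> D = 32 / p ->
  Ef p xs (fun t => cos ((k%:R - l%:R) * D * t + phi)) <= (k == l)%:R + 16^-1.
Proof.
move=> p0 ph sx hx hD.
have [hkl1 hkl2] := diff_bounds k l.
have p01 : 0 <= p <= 1 by apply/andP; split; lra.
case: eqP => [->|kl].
  rewrite subrr (@Ef_ext _ p xs _ (fun _ => cos phi)); last by move=> t; rewrite !mul0r add0r.
  rewrite Ef_const /=.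
  have := cos_le1 phi; lra.
rewrite /= add0r; apply: Ef_cos_le; first by [].
set th := (k%:R - l%:R) * D.
set f := fun x => 2 * p * (1 - p) * (1 - cos (th * x)).
have f01 : forall x, 0 <= f x <= 1.
  move=> x; rewrite /f; have := cos_le1 (th * x); have := cos_geN1 (th * x) => c1 c2.
  have pp : 0 <= 2 * p * (1 - p) <= 2^-1 by apply/andP; split; nra.
  apply/andP; split; nra.
have [hP [hP0 hS0]] := prod_bound xs f f01.
have hS : 255 <= \sum_(x <- xs) f x.
  have hD0 : 0 < D by rewrite hD divr_gt0.
  have th2 : D ^+ 2 <= th ^+ 2.
    rewrite /th exprMn; have := hkl2 (introT negP (fun e => kl (eqP e))).
    move=> h; have := sqr_ge0 D; nra.
  have fx : forall x, x \in xs -> 2 * p * (1 - p) * ((th * x) ^+ 2 / 3) <= f x.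
    move=> x xin; rewrite /f; apply: ler_wpM2l; first nra.
    apply: one_m_cos; rewrite normrM.
    have : `|th| <= 15 * D.
      by rewrite /th normrM (gtr0_norm hD0); apply: ler_wpM2r; lra.
    have := hx x xin; rewrite /rr => h1 h2.
    have : `|th| * `|x| <= 15 * D * (2 * (p / 512)).
      by apply: ler_pM => //; apply: normr_ge0.
    rewrite hD; move=> h3; apply: le_trans h3 _.
    have -> : 15 * (32 / p) * (2 * (p / 512)) = 15 / 8 :> R by field; lra.
    lra.
  have := @ler_sum _ _ xs (fun x => x \in xs) _ _ fx; rewrite -!big_seq.
  rewrite -mulr_sumr.
  have -> : \sum_(x <- xs) (th * x) ^+ 2 / 3 = th ^+ 2 / 3.
    rewrite -mulr_suml; under eq_bigr do rewrite exprMn.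
    by rewrite -mulr_sumr sx mulr1.
  move=> h; apply: le_trans h.
  have : 1024 / p ^+ 2 <= th ^+ 2 by apply: le_trans th2; rewrite hD expr_div_n; lra.
  move=> h1.
  have hp2 : 0 < p ^+ 2 by apply: exprn_gt0.
  have : 1024 <= th ^+ 2 * p ^+ 2.
    by rewrite -ler_pdivrMr.
  move=> h2.
  have : 2 * p * (1 - p) * (th ^+ 2 / 3) >= p * th ^+ 2 / 3.
    have := sqr_ge0 th; nra.
  move=> h3; apply: le_trans h3.
  have : p * th ^+ 2 >= 1024.
    have : p ^+ 2 <= p by rewrite expr2; nra.
    move=> h4; nra.
  lra.
have : \prod_(x <- xs) (1 - f x) * 256 <= 1.
  apply: le_trans hP; apply: ler_wpM2l => //; lra.
rewrite /f; lra.
Qed.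


Lemma fourier xs a : 0 < p -> p <= 2^-1 ->
  \sum_(x <- xs) x ^+ 2 = 1 -> (forall x, x \in xs -> `|x| <= 2 * rr) ->
  Ef p xs (ind a) <= 2^-1.
Proof.
move=> p0 ph sx hx.
have p01 : 0 <= p <= 1 by apply/andP; split; lra.
have /andP[pa pb] := p01.
set D := 32 / p.
have hD0 : 0 < D by rewrite divr_gt0.
have hDr : D * rr = 16^-1 by rewrite /D /rr; field; lra.
pose K t := (\sum_(k < 16) cos (k%:R * D * (t - a))) ^+ 2 +
            (\sum_(k < 16) sin (k%:R * D * (t - a))) ^+ 2.
apply: le_trans (_ : _ <= Ef p xs (fun t => 64^-1 * K t)) _.
  apply: Ef_le => // t; rewrite /ind; case: ifP => h; last first.
    by apply: mulr_ge0; rewrite ?invr_ge0 // /K addr_ge0 // sqr_ge0.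
  have hc : forall k : 'I_16, 2^-1 <= cos (k%:R * D * (t - a)).
    move=> k; apply: le_trans (cos_lb _).
    have hk : (k%:R : R) <= 15 by rewrite ler_nat -ltnS ltn_ord.
    have hk0 : (0 : R) <= k%:R by [].
    have : `|k%:R * D * (t - a)| <= 15 / 16.
      rewrite -mulrA normrM (ger0_norm hk0) normrM (gtr0_norm hD0).
      have : D * `|t - a| <= 16^-1 by rewrite -hDr; apply: ler_wpM2l => //; lra.
      move=> h1; have := normr_ge0 (t - a) => h2.
      apply: le_trans (_ : k%:R * 16^-1 <= _); first by apply: ler_wpM2l.
      lra.
    set y := k%:R * D * (t - a) => hy.
    have : y ^+ 2 <= 1.
      rewrite -real_normK ?num_real //; have := normr_ge0 y => h0; rewrite expr2; nra.
    lra.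
  have hs : 8 <= \sum_(k < 16) cos (k%:R * D * (t - a)).
    apply: le_trans (_ : \sum_(k < 16) (2^-1 : R) <= _); last by apply: ler_sum => k _; apply: hc.
    by rewrite sum_const16; lra.
  rewrite /K; move: hs; set S1 := \sum_(k < 16) _; set S2 := \sum_(k < 16) _ => hs.
  have h1 : 64 <= S1 ^+ 2 by rewrite expr2; nra.
  have := sqr_ge0 S2; lra.
have eK : forall t, 64^-1 * K t = 64^-1 * \sum_(k < 16) \sum_(l < 16)
     cos ((k%:R - l%:R) * D * t + (- ((k%:R - l%:R) * D * a))).
  move=> t; rewrite /K K_expand; congr (_ * _); apply: eq_bigr => k _; apply: eq_bigr => l _.
  congr cos; ring.
rewrite (@Ef_ext _ p xs _ _ eK) Ef_scale Ef_sum.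
apply: le_trans (_ : 64^-1 * \sum_(k < 16) \sum_(l < 16) ((k == l)%:R + 16^-1) <= _).
  apply: ler_wpM2l; first by [].
  apply: ler_sum => k _; rewrite Ef_sum; apply: ler_sum => l _.
  exact: term_bound.
have e1 : forall k : 'I_16, \sum_(l < 16) ((k == l)%:R + 16^-1 : R) = 2.
  move=> k; rewrite big_split /= (bigD1 k) //= eqxx big1 ?sum_const16.
    by rewrite addr0 /=; lra.
  by move=> l; rewrite eq_sym => /negPf ->.
rewrite (eq_bigr _ (fun k _ => e1 k)) sum_const16; lra.
Qed.

Lemma row_bound xs a : 0 < p -> p <= 2^-1 ->
  \sum_(x <- xs) x ^+ 2 = 1 -> Ef p xs (ind a) <= 1 - p.
Proof.
move=> p0 ph sx.
have p01 : 0 <= p <= 1 by apply/andP; split; lra.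
have /andP[pa pb] := p01.
have [/hasP [x xin hx]|/hasPn hx] := boolP (has (fun x => 2 * rr < `|x|) xs).
  apply: Ef_pair => //; first lra.
    by move=> t; rewrite /ind; case: ifP => _; lra.
  exists x => // t; rewrite /ind; case: ifP => h1; case: ifP => h2; try lra.
  exfalso; move: hx; rewrite ltNge => /negP; apply.
  have -> : x = (x + t - a) - (t - a) by ring.
  apply: le_trans (ler_normB _ _) _; lra.
apply: le_trans (fourier xs a p0 ph sx _) _; last lra.
by move=> y /hx; rewrite -leNgt.
Qed.

End Fourier.

Section Bridge.
Context {R : realType} (p : R).

Definition wb (b : bool) : R := if b then p else 1 - p.

Definition fcons n (b : bool) (f : {ffun 'I_n -> bool}) : {ffun 'I_n.+1 -> bool} :=
  [ffun j => if unlift ord0 j is Some j' then f j' else b].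
Definition fsplit n (F : {ffun 'I_n.+1 -> bool}) : bool * {ffun 'I_n -> bool} :=
  (F ord0, [ffun j => F (lift ord0 j)]).

Arguments fcons {n}.
Arguments fsplit {n}.

Lemma fcons_bij n : bijective (fun bf : bool * {ffun 'I_n -> bool} => fcons bf.1 bf.2).
Proof.
exists (@fsplit n).
  case=> b f; rewrite /fsplit /fcons /= ffunE unlift_none; congr pair.
  by apply/ffunP => j; rewrite !ffunE liftK.
move=> F; apply/ffunP => j; rewrite /fsplit /fcons /= ffunE.
by case: (unliftP ord0 j) => [j'|] -> //; rewrite ffunE.
Qed.

Lemma split_sum n (G : {ffun 'I_n.+1 -> bool} -> R) :
  \sum_(F : {ffun 'I_n.+1 -> bool}) G F =
  \sum_(b : bool) \sum_(f : {ffun 'I_n -> bool}) G (fcons b f).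
Proof.
rewrite (reindex (fun bf : bool * {ffun 'I_n -> bool} => fcons bf.1 bf.2)) /=.
  by rewrite pair_big.
by apply: onW_bij; apply: fcons_bij.
Qed.

Lemma bridge n (x : 'I_n -> R) (g : R -> R) :
  \sum_(f : {ffun 'I_n -> bool}) (\prod_(j < n) wb (f j)) * g (\sum_(j < n) (f j)%:R * x j)
  = Ef p [seq x j | j <- enum 'I_n] g.
Proof.
elim: n x g => [|n IH] x g.
  have -> : [seq x j | j <- enum 'I_0] = [::].
    by apply: size0nil; rewrite size_map size_enum_ord.
  rewrite /=; under eq_bigr do rewrite !big_ord0 mul1r.
  by rewrite sumr_const card_ffun card_ord card_bool expn0.
rewrite split_sum big_bool /= enum_ordSl /= -map_comp.
rewrite -!(IH (fun j => x (lift ord0 j))) /=.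
rewrite !mulr_sumr addrC; congr (_ + _); apply: eq_bigr => f _;
  rewrite big_ord_recl big_ord_recl /fcons !ffunE unlift_none /=;
  under eq_bigr do rewrite ffunE liftK;
  under [in X in g X]eq_bigr do rewrite ffunE liftK.
  by rewrite mul0r add0r mulrA.
by rewrite mul1r mulrA.
Qed.
End Bridge.

Section Num.
Context {R : realType}.

Lemma binom_bound (eps : R) m K : 0 < eps <= 1 -> K%:R <= eps * m%:R -> (K <= m)%N ->
  ('C(m, K))%:R <= (expR 1 / eps) `^ (eps * m%:R).
Proof.
move=> /andP[e0 e1] hK Km.
have h1 : ('C(m, K))%:R * eps ^+ K <= (eps + 1) ^+ m.
  rewrite exprD1n (bigD1 (Ordinal (leq_ltn_trans Km (ltnSn m)))) //=.
  apply: le_trans (_ : _ <= eps ^+ K *+ 'C(m, K)) _; first by rewrite mulr_natl.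
  rewrite -[X in X <= _]addr0 lerD2l; apply: sumr_ge0 => i _; rewrite mulrn_wge0 // exprn_ge0 //; lra.
have h2 : (eps + 1) ^+ m <= expR (eps * m%:R).
  rewrite mulrC expRM_natl; apply: lerXn2r; rewrite ?nnegrE; [lra| apply: expR_ge0|].
  by rewrite addrC expR_ge1Dx.
have h3 : (eps ^-1) ^+ K <= (eps ^-1) `^ (eps * m%:R).
  rewrite -powR_mulrn ?invr_ge0; last lra.
  apply: ler_powR => //; rewrite invf_ge1 //; lra.
have epos : 0 < eps ^+ K by apply: exprn_gt0.
have : ('C(m, K))%:R <= expR (eps * m%:R) * (eps ^-1) ^+ K.
  rewrite exprVn ler_pdivlMr //; exact: le_trans h1 h2.
move=> h4; apply: le_trans h4 _.
rewrite powRM ?invr_ge0 ?expR_ge0; last lra.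
rewrite -expRM mul1r; apply: ler_wpM2l; first exact: expR_ge0.
exact: h3.
by [].
Qed.

Lemma numeric (eps q : R) m K : 0 < eps <= 1 -> 0 < q <= 1 -> K%:R <= eps * m%:R -> (K <= m)%N ->
  ('C(m, K))%:R * q ^+ (m - K) <= (expR 1 / eps) `^ (eps * m%:R) * q `^ (m%:R * (1 - eps)).
Proof.
move=> he hq hK Km; apply: ler_pM.
- by [].
- by apply: exprn_ge0; case/andP: hq => /ltW.
- exact: binom_bound.
rewrite -powR_mulrn; last by case/andP: hq => /ltW.
apply: ger_powR => //.
rewrite natrB // mulrBr mulr1; lra.
Qed.
End Num.

Section Mx.
Context {R : realType}.

Lemma mx_factor m n (H : 'I_m -> {ffun 'I_n -> bool} -> R) :
  \sum_(M : 'M[bool]_(m, n)) \prod_(i < m) H i [ffun j => M i j] =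
  \prod_(i < m) \sum_(f : {ffun 'I_n -> bool}) H i f.
Proof.
rewrite bigA_distr_bigA /=.
rewrite (reindex (fun F : {ffun 'I_m -> {ffun 'I_n -> bool}} => \matrix_(i, j) F i j)) /=.
  apply: eq_bigr => F _; apply: eq_bigr => i _; congr (H i).
  by apply/ffunP => j; rewrite !ffunE mxE.
apply: onW_bij; exists (fun M : 'M[bool]_(m, n) => [ffun i => [ffun j => M i j]]).
  by move=> F; apply/ffunP => i; apply/ffunP => j; rewrite !ffunE mxE.
by move=> M; apply/matrixP => i j; rewrite mxE !ffunE.
Qed.

Lemma subset_card (T : finType) (A : {set T}) k : (k <= #|A|)%N ->
  exists B : {set T}, B \subset A /\ #|B| = k.
Proof.
move=> kA; exists [set y in take k (enum A)]; split.
  by apply/fintype.subsetP => y; rewrite inE => /mem_take; rewrite mem_enum.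
rewrite cardsE; have /card_uniqP -> := take_uniq k (enum_uniq (mem A)).
by rewrite size_takel // -cardE.
Qed.

Lemma rowval m n (M : 'M[bool]_(m, n)) (s : R) (x : 'cV[R]_n) i :
  ((mx01 R M + s *: ones_mx R m n) *m x) i 0 =
  \sum_(j < n) (M i j)%:R * x j 0 - (- (s * \sum_(j < n) x j 0)).
Proof.
rewrite opprK mxE mulr_sumr -big_split /=; apply: eq_bigr => j _.
by rewrite !mxE mulr1 mulrDl.
Qed.
End Mx.


Lemma sum_seqx (R : realType) n (x : 'cV[R]_n) :
  \sum_(y <- [seq x j 0 | j <- enum 'I_n]) y ^+ 2 = \sum_(j < n) x j 0 ^+ 2.
Proof. by rewrite big_map big_enum. Qed.

Theorem lemma3p4 (R : realType) (p : R) (hp0 : 0 < p) (hp1 : p <= 2^-1) :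
  exists gamma : R, 0 < gamma /\
  forall (eps : R) (n : nat) (s : R) (x : 'cV[R]_n),
    0 < eps -> eps <= 1 -> (2 <= n)%N -> norm2 x = 1 ->
    bern_prob p
      (fun M : 'M[bool]_(n.-1, n) =>
         norm2 ((mx01 R M + s *: ones_mx R n.-1 n) *m x)
           <= gamma * Num.sqrt (eps * n%:R))
    <= (expR 1 / eps) `^ (eps * (n.-1)%:R) * (1 - p) `^ ((n.-1)%:R * (1 - eps)).
Proof.
have r0 : 0 < rr p by rewrite /rr divr_gt0.
exists (rr p / 2); split; first by rewrite divr_gt0.
move=> eps n s x e0 e1 n2 nx.
set m := n.-1.
have nm : n = m.+1 by rewrite /m prednK // (leq_trans _ n2).
have m1 : (1 <= m)%N by rewrite -ltnS -nm.
clearbody m.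
have sx : \sum_(y <- [seq x j 0 | j <- enum 'I_n]) y ^+ 2 = 1.
  rewrite sum_seqx; move: nx; rewrite /norm2 => h.
  have h0 : 0 <= \sum_(j < n) x j 0 ^+ 2 by apply: sumr_ge0 => j _; apply: sqr_ge0.
  by rewrite -(sqr_sqrtr h0) h expr1n.
set a := - (s * \sum_(j < n) x j 0).
have hv0 : forall (M : 'M[bool]_(m, n)) i,
    ((mx01 R M + s *: ones_mx R m n) *m x) i 0 = \sum_(j < n) (M i j)%:R * x j 0 - a.
  by move=> M i; rewrite rowval.
clearbody a.
set K := Num.truncn (eps * m%:R).
have mpos : (0 : R) <= m%:R by [].
have Km : (K <= m)%N.
  rewrite /K truncn_le_nat; apply: le_lt_trans (_ : _ <= m%:R) _; last by rewrite ltr_nat.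
  by rewrite -[leRHS]mul1r; apply: ler_wpM2r.
have hK : K%:R <= eps * m%:R by rewrite /K truncn_le; apply: mulr_ge0 => //; lra.
have hKge : forall j : nat, j%:R <= eps * m%:R -> (j <= K)%N.
  by move=> j hj; rewrite /K truncn_ge_nat //; apply: mulr_ge0 => //; lra.
clearbody K.
set k := (m - K)%N.
pose S (M : 'M[bool]_(m, n)) i := \sum_(j < n) (M i j)%:R * x j 0.
pose SG (M : 'M[bool]_(m, n)) := \sum_(G : {set 'I_m} | #|G| == k) \prod_(i in G) ind p a (S M i).
have ind01 : forall t, 0 <= ind p a t <= 1 by move=> t; rewrite /ind; case: ifP => _; lra.
have SG0 : forall M, 0 <= SG M.
  move=> M; apply: sumr_ge0 => G _; apply: prodr_ge0 => i _; by case/andP: (ind01 (S M i)).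
have step1 : forall M : 'M[bool]_(m, n),
    norm2 ((mx01 R M + s *: ones_mx R m n) *m x) <= rr p / 2 * Num.sqrt (eps * n%:R) ->
    1 <= SG M.
  move=> M hE.
  pose v i := ((mx01 R M + s *: ones_mx R m n) *m x) i 0.
  have hv : forall i, v i = S M i - a by move=> i; rewrite /v hv0.
  have hsum : \sum_(i < m) v i ^+ 2 <= (rr p / 2) ^+ 2 * (eps * n%:R).
    move: hE; rewrite /norm2 -/v => hE.
    have h0 : 0 <= \sum_(i < m) v i ^+ 2 by apply: sumr_ge0 => i _; apply: sqr_ge0.
    have en : 0 <= eps * n%:R by apply: mulr_ge0 => //; lra.
    rewrite -(sqr_sqrtr h0) -(sqr_sqrtr en) -exprMn.
    apply: lerXn2r; rewrite ?nnegrE ?sqrtr_ge0 //.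
    by apply: mulr_ge0; [apply: ltW; rewrite divr_gt0 | apply: sqrtr_ge0].
  pose Bd := [set i | rr p < `|v i|]%SET.
  have hBd : (#|Bd|%:R : R) * (rr p) ^+ 2 <= \sum_(i < m) v i ^+ 2.
    apply: le_trans (_ : \sum_(i in Bd) v i ^+ 2 <= _).
      have -> : (#|Bd|%:R : R) * rr p ^+ 2 = \sum_(i in Bd) rr p ^+ 2 by rewrite sumr_const mulr_natl.
      apply: ler_sum => i; rewrite inE => hi.
      rewrite -[v i ^+ 2]real_normK ?num_real //; apply: lerXn2r; rewrite ?nnegrE //; lra.
    rewrite [leRHS](bigID (fun i => i \in Bd)) /= lerDl.
    by apply: sumr_ge0 => i _; apply: sqr_ge0.
  have cardBd : (#|Bd| <= K)%N.
    apply: hKge.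
    have hn : (n%:R : R) <= 4 * m%:R.
      rewrite nm -natr1; have : (1 : R) <= m%:R by rewrite ler1n.
      lra.
    have h1 : (rr p / 2) ^+ 2 * (eps * n%:R) <= rr p ^+ 2 * (eps * m%:R).
      have e : forall c : R, c ^+ 2 * (eps * m%:R) = (c / 2) ^+ 2 * (eps * (4 * m%:R)).
        by move=> c; field.
      rewrite e.
      apply: ler_wpM2l; first by apply: sqr_ge0.
      by apply: ler_wpM2l => //; lra.
    have h2 := le_trans hBd (le_trans hsum h1).
    have rp : 0 < rr p ^+ 2 by apply: exprn_gt0.
    by rewrite -(ler_pM2r rp) (mulrC (eps * _)).
  have cardA : (k <= #|~: Bd|)%N.
    by rewrite /k leq_subLR -[X in (X <= _)%N](card_ord m) -(cardsC Bd) leq_add2r.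
  have [B [BA cB]] := subset_card _ _ _ cardA.
  rewrite /SG (bigD1 B) /=; last by rewrite cB eqxx.
  have -> : \prod_(i in B) ind p a (S M i) = 1.
    apply: big1 => i iB.
    have : i \in ~: Bd by apply: (fintype.subsetP BA).
    rewrite !inE -leNgt hv => h; by rewrite /ind h.
  rewrite lerDl; apply: sumr_ge0 => G _; apply: prodr_ge0 => i _.
  by case/andP: (ind01 (S M i)).
have W0 : forall M : 'M[bool]_(m, n), 0 <= bern_weight p M.
  move=> M; apply: prodr_ge0 => i _; apply: prodr_ge0 => j _; case: (M i j); lra.
rewrite /bern_prob.
apply: le_trans (_ : \sum_(M : 'M[bool]_(m, n)) bern_weight p M * SG M <= _).
  rewrite big_mkcond; apply: ler_sum => M _; case: ifP => hE.
    rewrite -[X in X <= _]mulr1; apply: ler_wpM2l; first exact: W0.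
    exact: step1 M hE.
  by apply: mulr_ge0.
rewrite /SG; under eq_bigr do rewrite mulr_sumr; rewrite exchange_big /=.
apply: le_trans (_ : \sum_(G : {set 'I_m} | #|G| == k) (1 - p) ^+ k <= _).
  apply: ler_sum => G /eqP cG.
  pose H (i : 'I_m) (f : {ffun 'I_n -> bool}) := (\prod_(j < n) wb p (f j)) *
     (if i \in G then ind p a (\sum_(j < n) (f j)%:R * x j 0) else 1).
  have -> : \sum_(M : 'M[bool]_(m, n)) bern_weight p M * \prod_(i in G) ind p a (S M i) =
      \prod_(i < m) \sum_(f : {ffun 'I_n -> bool}) H i f.
    rewrite -mx_factor; apply: eq_bigr => M _.
    rewrite /bern_weight [\prod_(i in G) _]big_mkcond -big_split /=; apply: eq_bigr => i _.
    rewrite /H; congr (_ * _); first by apply: eq_bigr => j _; rewrite ffunE.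
    case: (i \in G) => //; congr (ind p a _); apply: eq_bigr => j _; by rewrite ffunE.
  rewrite -cG -prodr_const [leRHS]big_mkcond /=.
  apply: ler_prod => i _.
  have b1 := bridge p _ (fun j => x j 0) (ind p a).
  have b2 := bridge p _ (fun j => x j 0) (fun _ => 1).
  rewrite Ef_const in b2.
  rewrite /H; case: (i \in G).
    rewrite b1; apply/andP; split.
      by rewrite -b1; apply: sumr_ge0 => f _; apply: mulr_ge0;
        [apply: prodr_ge0 => j _; rewrite /wb; case: (f j); lra | case/andP: (ind01 (\sum_(j < n) (f j)%:R * x j 0))].
    exact: row_bound.
  have -> : \sum_(f : {ffun 'I_n -> bool}) (\prod_(j < n) wb p (f j)) * 1 = 1 by rewrite -[RHS]b2.
  by rewrite lexx ler01.
rewrite (eq_bigl (fun G => G \in [set G : {set 'I_m} | #|G| == k]%SET)); last by move=> G; rewrite inE.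
rewrite sumr_const card_draws card_ord /k bin_sub // -[_ *+ 'C(m, K)]mulr_natl.
apply: numeric => //; apply/andP; split; lra.
Qed.
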